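(* In the setting of the context, with $S(t)=\tilde S e^{(\beta/\gamma)\tilde R}\varphi^{-1}(t)$ and $S(\infty):=\lim_{t\to\infty}S(t)$, the following relation holds: \[ S(\infty)=\tilde S+\tilde E+\tilde I+\frac{\gamma}{\beta}\log\frac{S(\infty)}{\tilde S}. \]
   Context: Let $\beta,\gamma,\delta>0$ be constants and $\tilde S,\tilde E,\tilde I,\tilde R$ real numbers with $N:=\tilde S+\tilde E+\tilde I+\tilde R>0$. Standing assumptions: (A1) $\tilde I>0$; (A2) $\tilde E>(\gamma/\delta)\tilde I$; (A3) $\tilde S>\delta\tilde E/(\beta\tilde I)$; (A4) $\tilde R\ge 0$ and $N>\tilde S e^{(\beta/\gamma)\tilde R}+\tilde R$. Let $\alpha$ be the unique solution in $(\tilde R,N)$ of $x=N-\tilde S e^{(\beta/\gamma)\tilde R}e^{-(\beta/\gamma)x}$, and assume (A5) $\tilde S<(\gamma/\beta)e^{(\beta/\gamma)(\alpha-\tilde R)}$. Put $u_0:=e^{-(\beta/\gamma)\tilde R}$, $u_\infty:=e^{-(\beta/\gamma)\alpha}$. Let $\psi$ be the unique function, continuous and positive on $(u_\infty,u_0]$ and $C^1$ on $(u_\infty,u_0)$, satisfying $\psi'(u)\psi(u)-\frac{\gamma+\delta}{u}\psi(u)=-\delta\,\frac{\beta N-\beta\tilde S e^{(\beta/\gamma)\tilde R}u+\gamma\log u}{u}$ on $(u_\infty,u_0)$ and $\psi(u_0)=\beta\tilde I$. Let $\varphi(u):=\int_u^{u_0}\frac{d\xi}{\xi\psi(\xi)}$;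 $\varphi$ is a strictly decreasing continuous bijection from $(u_\infty,u_0]$ onto $[0,\infty)$, with inverse $\varphi^{-1}:[0,\infty)\to(u_\infty,u_0]$. *)

(* Defs.v *)
From Stdlib Require Import Reals.
From Coquelicot Require Import Coquelicot.
Open Scope R_scope.

Definition Ntot (St Et It Rt : R) : R := St + Et + It + Rt.

Definition u0 (beta gamma Rt : R) : R := exp (- (beta / gamma) * Rt).

Definition uinf (beta gamma alpha : R) : R := exp (- (beta / gamma) * alpha).

Definition phi (psi : R -> R) (u0v : R) (u : R) : R :=
  RInt (fun xi => / (xi * psi xi)) u u0v.

(* Main.v *)
From Stdlib Require Import Reals Lra.
From Coquelicot Require Import Coquelicot.
Open Scope R_scope.

Require Import Defs.
Lemma ball_R (x e y : R) : ball x e y <-> Rabs (y - x) < e.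
Proof. split; intro H; exact H. Qed.

Lemma bound_int (f : R -> R) (lo hi a : R) :
  lo < a -> a <= hi ->
  (forall y, lo < y <= hi -> continuous f y) ->
  (forall y, lo < y <= hi -> 0 < f y) ->
  exists M, 0 <= M /\ forall u, a <= u <= hi -> RInt f u hi <= (hi - u) * M.
Proof.
  intros Hla Hah Hc Hp.
  destruct (continuity_ab_maj f a hi Hah) as [Mx [HM HMx]].
  { intros c Hc'. apply continuity_pt_filterlim. apply Hc. lra. }
  exists (f Mx). split. { left. apply Hp. lra. }
  intros u Hu.
  assert (Hex : ex_RInt f u hi).
  { apply (@ex_RInt_continuous R_CompleteNormedModule). intros z Hz.
    rewrite Rmin_left in Hz by lra. rewrite Rmax_right in Hz by lra.
    apply Hc. lra. }
  pose proof (abs_RInt_le_const f u hi (f Mx) (proj2 Hu) Hex) as H.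
  assert (H' : Rabs (RInt f u hi) <= (hi - u) * f Mx).
  { apply H. intros t Ht. rewrite Rabs_pos_eq. apply HM. lra.
    left. apply Hp. lra. }
  pose proof (Rle_abs (RInt f u hi)). lra.
Qed.
Theorem main_part
  (beta gamma delta St Et It Rt alpha : R) (psi phiinv : R -> R)
  (Hpsi_pos : forall u, uinf beta gamma alpha < u <= u0 beta gamma Rt -> 0 < psi u)
  (Hpsi_cont_left : filterlim psi (at_left (u0 beta gamma Rt))
                      (locally (psi (u0 beta gamma Rt))))
  (Hpsi_C1 : forall u, uinf beta gamma alpha < u < u0 beta gamma Rt ->
               ex_derive psi u /\ continuous (Derive psi) u)
  (Hphiinv : forall t, 0 <= t ->
               uinf beta gamma alpha < phiinv t <= u0 beta gamma Rt /\
               phi psi (u0 beta gamma Rt) (phiinv t) = t) :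
  is_lim phiinv p_infty (uinf beta gamma alpha).
Proof.
  set (lo := uinf beta gamma alpha) in *.
  set (hi := u0 beta gamma Rt) in *.
  assert (Hlohi : lo < hi) by (destruct (Hphiinv 0 (Rle_refl 0)); lra).
  assert (Hlo0 : 0 < lo) by (unfold lo, uinf; apply exp_pos).
  set (psi' := fun x => if Rlt_dec x hi then psi x else psi hi).
  set (f' := fun x => / (x * psi' x)).
  assert (Hpsi'c : forall y, lo < y <= hi -> continuous psi' y).
  { intros y Hy. destruct (Req_dec y hi) as [->|Hne].
    - unfold continuous. replace (psi' hi) with (psi hi)
        by (unfold psi'; destruct (Rlt_dec hi hi); lra).
      apply filterlim_locally. intros eps.
      pose proof (proj1 (filterlim_locally psi (psi hi)) Hpsi_cont_left eps) as H.
      unfold at_left, within in H.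
      eapply filter_imp; [|exact H]. intros x Hx. unfold psi'.
      destruct (Rlt_dec x hi) as [Hl|Hl]. now apply Hx. apply ball_center.
    - apply (continuous_ext_loc psi' psi).
      + assert (Hd : 0 < hi - y) by lra.
        exists (mkposreal _ Hd). intros z Hz. pose proof (proj1 (ball_R _ _ _) Hz) as Hz'. simpl in Hz'.
        unfold psi'. destruct (Rlt_dec z hi) as [Hl|Hl]. reflexivity.
        exfalso. apply Rabs_def2 in Hz'. destruct Hz'. lra.
      + assert (Hyy : lo < y < hi) by lra.
        exact (@ex_derive_continuous R_AbsRing R_NormedModule psi y (proj1 (Hpsi_C1 y Hyy))). }
  assert (Hpos' : forall y, lo < y <= hi -> 0 < y * psi' y).
  { intros y Hy. apply Rmult_lt_0_compat. lra. unfold psi'.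
    destruct (Rlt_dec y hi); apply Hpsi_pos; lra. }
  assert (Hf'c : forall y, lo < y <= hi -> continuous f' y).
  { intros y Hy. apply continuous_Rinv_comp.
    - apply (continuous_mult (fun x => x) psi'). apply continuous_id. now apply Hpsi'c.
    - pose proof (Hpos' y Hy). lra. }
  assert (Hf'p : forall y, lo < y <= hi -> 0 < f' y).
  { intros y Hy. unfold f'. apply Rinv_0_lt_compat. now apply Hpos'. }
  apply is_lim_spec. intros eps. simpl.
  set (a := lo + eps / 2).
  assert (He := cond_pos eps).
  destruct (Rle_lt_dec hi a) as [Hha|Hah].
  - exists 0. intros t Ht. destruct (Hphiinv t ltac:(lra)) as [H1 _].
    rewrite Rabs_pos_eq by lra. unfold a in Hha. lra.
  - destruct (bound_int f' lo hi a ltac:(unfold a; lra) ltac:(lra) Hf'c Hf'p) as [M [HM0 HM]].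
    exists ((hi - a) * M). intros t Ht.
    assert (Ht0 : 0 <= t) by (pose proof (Rmult_le_pos (hi - a) M ltac:(lra) HM0); lra).
    destruct (Hphiinv t Ht0) as [H1 H2].
    rewrite Rabs_pos_eq by lra.
    destruct (Rlt_le_dec (phiinv t) a) as [Hl|Hl]. { unfold a in Hl. lra. }
    exfalso.
    assert (HR : phi psi hi (phiinv t) = RInt f' (phiinv t) hi).
    { unfold phi. apply RInt_ext. intros x Hx.
      rewrite Rmin_left in Hx by lra. rewrite Rmax_right in Hx by lra.
      unfold f', psi'. destruct (Rlt_dec x hi); [reflexivity| lra]. }
    pose proof (HM (phiinv t) (conj Hl (proj2 H1))) as HB.
    rewrite <- HR, H2 in HB.
    assert ((hi - phiinv t) * M <= (hi - a) * M) by (apply Rmult_le_compat_r; lra).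
    lra.
Qed.

Theorem theorem12
  (beta gamma delta St Et It Rt alpha : R) (psi phiinv : R -> R)
  (Hbeta : 0 < beta) (Hgamma : 0 < gamma) (Hdelta : 0 < delta)
  (HN : 0 < Ntot St Et It Rt)
  (A1 : 0 < It)
  (A2 : Et > (gamma / delta) * It)
  (A3 : St > delta * Et / (beta * It))
  (A4a : 0 <= Rt)
  (A4b : Ntot St Et It Rt > St * exp ((beta / gamma) * Rt) + Rt)
  (* alpha : the (unique) solution in (R~, N) of x = N - S~ e^{(b/g)R~} e^{-(b/g)x} *)
  (Halpha_lo : Rt < alpha) (Halpha_hi : alpha < Ntot St Et It Rt)
  (Halpha_eq : alpha = Ntot St Et It Rt
                 - St * exp ((beta / gamma) * Rt) * exp (- (beta / gamma) * alpha))
  (A5 : St < (gamma / beta) * exp ((beta / gamma) * (alpha - Rt)))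
  (* psi : the (unique) solution of the ODE problem on (u_inf, u_0] *)
  (Hpsi_pos : forall u, uinf beta gamma alpha < u <= u0 beta gamma Rt -> 0 < psi u)
  (Hpsi_cont_left : filterlim psi (at_left (u0 beta gamma Rt))
                      (locally (psi (u0 beta gamma Rt))))
  (Hpsi_C1 : forall u, uinf beta gamma alpha < u < u0 beta gamma Rt ->
               ex_derive psi u /\ continuous (Derive psi) u)
  (Hpsi_ode : forall u, uinf beta gamma alpha < u < u0 beta gamma Rt ->
               Derive psi u * psi u - (gamma + delta) / u * psi u =
               - delta * (beta * Ntot St Et It Rt
                          - beta * St * exp ((beta / gamma) * Rt) * u
                          + gamma * ln u) / u)
  (Hpsi_init : psi (u0 beta gamma Rt) = beta * It)
  (* phiinv : the inverse of phi, from [0, oo) onto (u_inf, u_0] *)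
  (Hphiinv : forall t, 0 <= t ->
               uinf beta gamma alpha < phiinv t <= u0 beta gamma Rt /\
               phi psi (u0 beta gamma Rt) (phiinv t) = t) :
  let S := fun t => St * exp ((beta / gamma) * Rt) * phiinv t in
  exists Sinf : R,
    is_lim S p_infty Sinf /\
    Sinf = St + Et + It + (gamma / beta) * ln (Sinf / St).

Proof.
  intros S.
  exists (St * exp ((beta / gamma) * Rt) * uinf beta gamma alpha).
  split.
  - pose proof (main_part beta gamma delta St Et It Rt alpha psi phiinv
                  Hpsi_pos Hpsi_cont_left Hpsi_C1 Hphiinv) as H.
    apply (is_lim_scal_l _ (St * exp ((beta / gamma) * Rt))) in H.
    exact H.
  - assert (HEt : 0 < Et).
    { assert (0 < gamma / delta * It) by (apply Rmult_lt_0_compat;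
        [apply Rdiv_lt_0_compat|]; lra). lra. }
    assert (HSt : 0 < St).
    { assert (0 < delta * Et / (beta * It)).
      { apply Rdiv_lt_0_compat. apply Rmult_lt_0_compat; lra. apply Rmult_lt_0_compat; lra. }
      lra. }
    unfold uinf.
    replace (St * exp (beta / gamma * Rt) * exp (- (beta / gamma) * alpha) / St)
      with (exp (beta / gamma * Rt + - (beta / gamma) * alpha)).
    2:{ rewrite exp_plus. field. lra. }
    rewrite ln_exp.
    unfold Ntot in Halpha_eq.
    replace (gamma / beta * (beta / gamma * Rt + - (beta / gamma) * alpha)) with (Rt - alpha)
      by (field; lra).
    lra.
Qed.
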